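(* Consider the following chemical reaction network (the ERK cascade without feedback in which MEK and ERK share the same phosphatase PH) with 21 species RAF, pRAF, MEK, pMEK, ppMEK, ERK, pERK, ppERK, RAS, RAFPH, PH, RAS-RAF, MEK-pRAF, pMEK-pRAF, ERK-ppMEK, pERK-ppMEK, RAF-RAFPH, ppMEK-PH, pMEK-PH, ppERK-PH, pERK-PH and 30 reactions with rate constants $k_1,\dots,k_{30}$: RAF + RAS $\underset{k_2}{\overset{k_1}{\rightleftarrows}}$ RAS-RAF $\overset{k_3}{\to}$ pRAF + RAS; pRAF + RAFPH $\underset{k_5}{\overset{k_4}{\rightleftarrows}}$ RAF-RAFPH $\overset{k_6}{\to}$ RAF + RAFPH; MEK + pRAF $\underset{k_8}{\overset{k_7}{\rightleftarrows}}$ MEK-pRAF $\overset{k_9}{\to}$ pMEK + pRAF $\underset{k_{11}}{\overset{k_{10}}{\rightleftarrows}}$ pMEK-pRAF $\overset{k_{12}}{\to}$ ppMEK + pRAF; ppMEK + PH $\underset{k_{14}}{\overset{k_{13}}{\rightleftarrows}}$ ppMEK-PH $\overset{k_{15}}{\to}$ pMEK + PH $\underset{k_{17}}{\overset{k_{16}}{\rightleftarrows}}$ pMEK-PH $\overset{k_{18}}{\to}$ MEK + PH; ERK + ppMEK $\underset{k_{20}}{\overset{k_{19}}{\rightleftarrows}}$ ERK-ppMEK $\overset{k_{21}}{\to}$ pERK + ppMEK $\underset{k_{23}}{\overset{k_{22}}{\rightleftarrows}}$ pERK-ppMEK $\overset{k_{24}}{\to}$ ppERK + ppMEK; ppERK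 + PH $\underset{k_{26}}{\overset{k_{25}}{\rightleftarrows}}$ ppERK-PH $\overset{k_{27}}{\to}$ pERK + PH $\underset{k_{29}}{\overset{k_{28}}{\rightleftarrows}}$ pERK-PH $\overset{k_{30}}{\to}$ ERK + PH. Then for every choice of positive rate constants $k\in\mathbb{R}^{30}_{>0}$, the associated mass-action system has toric steady states; in particular its steady state ideal is a binomial ideal.
   Context: For a reaction network with species concentrations $x=(x_1,\dots,x_s)$ and reactions $y\to y'$ (complexes $y,y'\in\mathbb{Z}_{\ge0}^s$, where a complex is a formal sum of species) with positive rate constants, the mass-action system is $\dot x = f(x;k)=\sum_{\text{reactions } y\to y'} k_{y\to y'}\, x^{y}(y'-y)$, whose components $f_1,\dots,f_s$ are polynomials in $x$. The steady state ideal is $J=\langle f_1,\dots,f_s\rangle\subseteq\mathbb{R}[x_1,\dots,x_s]$. The system has toric steady states if $J$ can be generated by binomials (polynomials with at most two terms) and $J$ admits nonnegative zeros. *)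

(* Defs.v *)
From mathcomp Require Import all_boot all_algebra.
From mathcomp Require Import mpoly.
Set Implicit Arguments. Unset Strict Implicit. Unset Printing Implicit Defensive.
Import GRing.Theory.
Local Open Scope ring_scope.

(* A reaction y -> y' with rate constant index: reactant complex and product
   complex are given as multisets (lists) of species indices. *)
Definition reaction (n m : nat) := (seq 'I_n * seq 'I_n * 'I_m)%type.

Definition cmonom (R : ringType) (n : nat) (y : seq 'I_n) : {mpoly R[n]} :=
  \prod_(i <- y) 'X_i.

Definition massaction (R : ringType) (n m : nat) (rxns : seq (reaction n m))
  (k : 'I_m -> R) (s : 'I_n) : {mpoly R[n]} :=
  \sum_(r <- rxns)
     (k r.2 * ((count_mem s r.1.2)%:R - (count_mem s r.1.1)%:R)) *: cmonom R r.1.1.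

Definition in_ideal (R : ringType) (n : nat) (gs : seq {mpoly R[n]}) (p : {mpoly R[n]}) : Prop :=
  exists cs : seq {mpoly R[n]}, size cs = size gs /\
    p = \sum_(i < size gs) cs`_i * gs`_i.

Definition is_binomial (R : ringType) (n : nat) (p : {mpoly R[n]}) : bool :=
  (size (msupp p) <= 2)%N.

Definition ss_gens (R : ringType) (n m : nat) (rxns : seq (reaction n m)) (k : 'I_m -> R)
  : seq {mpoly R[n]} := [seq massaction rxns k s | s <- enum 'I_n].

Definition has_toric_steady_states (R : realDomainType) (n m : nat)
  (rxns : seq (reaction n m)) (k : 'I_m -> R) : Prop :=
  (exists gs : seq {mpoly R[n]}, all (@is_binomial R n) gs /\
     forall p, in_ideal gs p <-> in_ideal (ss_gens rxns k) p)
  /\ (exists x : 'I_n -> R, (forall i, 0 <= x i) /\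
        forall s, (massaction rxns k s).@[x] = 0).

(* Species (0-based):
   0 RAF, 1 pRAF, 2 MEK, 3 pMEK, 4 ppMEK, 5 ERK, 6 pERK, 7 ppERK, 8 RAS,
   9 RAFPH, 10 PH, 11 RAS-RAF, 12 MEK-pRAF, 13 pMEK-pRAF, 14 ERK-ppMEK,
   15 pERK-ppMEK, 16 RAF-RAFPH, 17 ppMEK-PH, 18 pMEK-PH, 19 ppERK-PH, 20 pERK-PH.
   Rate constant k_j is index j-1. *)
Definition erk_raw : seq (seq nat * seq nat * nat) :=
  [:: ([:: 0; 8], [:: 11], 0); ([:: 11], [:: 0; 8], 1); ([:: 11], [:: 1; 8], 2);
      ([:: 1; 9], [:: 16], 3); ([:: 16], [:: 1; 9], 4); ([:: 16], [:: 0; 9], 5);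
      ([:: 2; 1], [:: 12], 6); ([:: 12], [:: 2; 1], 7); ([:: 12], [:: 3; 1], 8);
      ([:: 3; 1], [:: 13], 9); ([:: 13], [:: 3; 1], 10); ([:: 13], [:: 4; 1], 11);
      ([:: 4; 10], [:: 17], 12); ([:: 17], [:: 4; 10], 13); ([:: 17], [:: 3; 10], 14);
      ([:: 3; 10], [:: 18], 15); ([:: 18], [:: 3; 10], 16); ([:: 18], [:: 2; 10], 17);
      ([:: 5; 4], [:: 14], 18); ([:: 14], [:: 5; 4], 19); ([:: 14], [:: 6; 4], 20);
      ([:: 6; 4], [:: 15], 21); ([:: 15], [:: 6; 4], 22); ([:: 15], [:: 7; 4], 23);
      ([:: 7; 10], [:: 19], 24); ([:: 19], [:: 7; 10], 25); ([:: 19], [:: 6; 10], 26);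
      ([:: 6; 10], [:: 20], 27); ([:: 20], [:: 6; 10], 28); ([:: 20], [:: 5; 10], 29)].

Definition erk_network : seq (reaction 21 30) :=
  [seq ([seq (inord i : 'I_21) | i <- r.1.1], [seq (inord i : 'I_21) | i <- r.1.2],
        (inord r.2 : 'I_30)) | r <- erk_raw].

(* Main.v *)
Require Import Defs.
From mathcomp Require Import all_boot all_algebra.
From mathcomp Require Import mpoly.
From mathcomp Require Import ring.
Local Open Scope ring_scope.
Import GRing.Theory Num.Theory.
Definition dn (s : nat) (r : seq nat * seq nat * nat) : int := (count_mem s r.1.2)%:Z - (count_mem s r.1.1)%:Z.
Definition swn (W : seq (nat * int)) r : int := foldr (fun p a => p.2 * dn p.1 r + a) 0 W.
Definition Gs : seq (seq (nat * int)) :=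
  [seq [seq (t, 1%:Z) | t <- L] | L <- [:: [::8]; [::9]; [::11];[::12];[::13];[::14];[::15];[::16];[::17];[::18];[::19];[::20];
     [::0;11]; [::2;12]; [::4;17;14;15]; [::5;14]; [::7;19]]]%N.
Definition Wtab : seq (seq (nat * int)) :=
 [:: [:: (12%N,1%Z);(2%N,-1%Z)];
     [:: (12%N,-1%Z);(7%N,-1%Z);(3%N,-1%Z);(4%N,-1%Z)];
     [:: (13%N,1%Z);(3%N,-1%Z)];
     [:: (13%N,-1%Z);(14%N,-1%Z);(4%N,-1%Z);(9%N,-1%Z)];
     [:: (14%N,1%Z);(8%N,-1%Z);(5%N,-1%Z);(6%N,-1%Z)];
     [:: (15%N,1%Z);(5%N,-1%Z)];
     [:: (15%N,-1%Z);(16%N,-1%Z);(6%N,-1%Z);(11%N,-1%Z)];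
     [:: (16%N,1%Z);(10%N,-1%Z)];
     [:: (0%N,1%Z)]; [:: (1%N,1%Z)];
     [:: (8%N,-1%Z);(9%N,-1%Z);(10%N,-1%Z);(11%N,-1%Z)];
     [:: (2%N,1%Z)];[:: (3%N,1%Z)];[:: (4%N,1%Z)];[:: (5%N,1%Z)];[:: (6%N,1%Z)];[:: (7%N,1%Z)];[:: (8%N,1%Z)];[:: (9%N,1%Z)];[:: (10%N,1%Z)];[:: (11%N,1%Z)]].
Definition expand (Ws : seq (nat * int)) : seq (nat * int) :=
  flatten [seq [seq (q.1, p.2 * q.2) | q <- nth [::] Gs p.1] | p <- Ws].
Lemma binom_check : all (fun L => size (undup [seq r.1.1 | r <- erk_raw & swn L r != 0]) <= 2)%N Gs.
Proof. vm_compute. reflexivity. Qed.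
Lemma expr_check : all (fun i => all (fun r => swn [:: (i, 1)] r == swn (expand (nth [::] Wtab i)) r) erk_raw) (iota 0 21).
Proof. vm_compute. reflexivity. Qed.
Lemma bound_check : all (fun r => all (fun i => i < 21) r.1.1 && all (fun i => i < 21) r.1.2 && (r.2 < 30) && (r.1.1 != [::]))%N erk_raw.
Proof. vm_compute. reflexivity. Qed.
Lemma gs_bound : all (fun L => all (fun p => p.1 < 21)%N L) Gs.
Proof. vm_compute. reflexivity. Qed.
Lemma expand_bound : all (fun i => all (fun p => p.1 < 21)%N (expand (nth [::] Wtab i))) (iota 0 21).
Proof. vm_compute. reflexivity. Qed.

Section Ideal.
Variables (R : nzRingType) (n : nat).
Implicit Types (gs hs : seq {mpoly R[n]}) (p q : {mpoly R[n]}).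

Lemma in_idealE gs p : in_ideal gs p <-> exists c : nat -> {mpoly R[n]}, p = \sum_(i < size gs) c i * gs`_i.
Proof.
split.
  by move=> [cs [_ ->]]; exists (nth 0 cs).
move=> [c ->]; exists (mkseq c (size gs)); rewrite size_mkseq; split => //.
by apply: eq_bigr => i _; rewrite nth_mkseq.
Qed.

Lemma I0 gs : in_ideal gs 0.
Proof. by apply/in_idealE; exists (fun _ => 0); rewrite big1 // => i _; rewrite mul0r. Qed.

Lemma ID gs p q : in_ideal gs p -> in_ideal gs q -> in_ideal gs (p + q).
Proof.
move=> /in_idealE [c1 ->] /in_idealE [c2 ->]; apply/in_idealE; exists (fun i => c1 i + c2 i).
by rewrite -big_split; apply: eq_bigr => i _; rewrite mulrDl.
Qed.

Lemma IM gs a p : in_ideal gs p -> in_ideal gs (a * p).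
Proof.
move=> /in_idealE [c ->]; apply/in_idealE; exists (fun i => a * c i).
by rewrite mulr_sumr; apply: eq_bigr => i _; rewrite mulrA.
Qed.

Lemma IG gs i : in_ideal gs gs`_i.
Proof.
case: (ltnP i (size gs)) => Hi; last by rewrite nth_default //; exact: I0.
apply/in_idealE; exists (fun j => (j == i)%:R).
rewrite (bigD1 (Ordinal Hi)) //= eqxx mul1r big1 ?addr0 // => j Hj.
have -> : (nat_of_ord j == i) = false.
  by apply/negbTE; move: Hj; apply: contra => /eqP Hj; apply/eqP/val_inj.
by rewrite mul0r.
Qed.

Lemma Isum (I : Type) gs (l : seq I) (f : I -> {mpoly R[n]}) :
  (forall x, in_ideal gs (f x)) -> in_ideal gs (\sum_(x <- l) f x).
Proof. move=> H; apply: (big_ind (in_ideal gs)) => //; [exact: I0 | exact: ID]. Qed.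

Lemma Isub gs hs p : (forall i, in_ideal hs gs`_i) -> in_ideal gs p -> in_ideal hs p.
Proof. move=> H /in_idealE [c ->]; apply: Isum => i; exact: IM. Qed.
End Ideal.

Section Main.
Variables (R : realFieldType) (k : 'I_30 -> R).
Hypothesis hk : forall j, 0 < k j.

Local Notation F s := (massaction erk_network k s).

Definition comb (W : seq (nat * int)) : {mpoly R[21]} :=
  \sum_(p <- W) p.2%:~R * F (inord p.1).

Lemma cnt (s : nat) l : (s < 21)%N -> all (fun i => i < 21)%N l ->
  count_mem (inord s : 'I_21) [seq inord i | i <- l] = count_mem s l.
Proof.
move=> Hs; elim: l => //= a l IH /andP [Ha Hl]; rewrite IH //; congr (_ + _)%N.
by rewrite -(inj_eq val_inj) /= !inordK.
Qed.

Lemma massaction_raw s : (s < 21)%N ->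
  F (inord s) = \sum_(rr <- erk_raw) (k (inord rr.2) * (dn s rr)%:~R) *: cmonom R [seq (inord i : 'I_21) | i <- rr.1.1].
Proof.
move=> Hs; rewrite /massaction /erk_network big_map; apply: eq_big_seq => rr Hrr /=.
have /andP [/andP [/andP [H1 H2] _] _] := allP bound_check rr Hrr.
rewrite !cnt // /dn intrB //.
Qed.

Lemma auxZ (a c : R) (z : int) (M : {mpoly R[21]}) :
  z%:~R * (a *: M) + c *: M = (a * z%:~R + c) *: M.
Proof. by rewrite mulrzl scalerMzl -scalerDl -mulrzr. Qed.

Lemma comb_key W : all (fun p => p.1 < 21)%N W ->
  comb W = \sum_(rr <- erk_raw) (k (inord rr.2) * (swn W rr)%:~R) *: cmonom R [seq (inord i : 'I_21) | i <- rr.1.1].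
Proof.
elim: W => [|p W IH] /=.
  by move=> _; rewrite /comb big_nil big1 // => rr _; rewrite mulr0 scale0r.
move=> /andP [Hp HW]; rewrite /comb big_cons -/(comb W) IH // massaction_raw //.
rewrite mulr_sumr -big_split; apply: eq_bigr => rr _ /=.
apply: etrans (auxZ _ _ _ _) _; congr (_ *: _).
rewrite /dn !(intrD, intrM, intrN, intrB, mulrzr) /=; ring.
Qed.

Definition mm (y : seq nat) : 'X_{1.. 21} := (\sum_(i <- [seq (inord i : 'I_21) | i <- y]) U_(i))%MM.

Lemma cmonomE (y : seq 'I_21) : cmonom R y = 'X_[(\sum_(i <- y) U_(i))%MM].
Proof.
rewrite /cmonom; elim: y => [|a y IH]; first by rewrite !big_nil mpolyX0.
by rewrite !big_cons IH mpolyXD.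
Qed.

Lemma msupp_zero (m : 'X_{1.. 21}) : m \in msupp (0 : {mpoly R[21]}) -> False.
Proof. by have := msupp0 21 R; rewrite /= => ->. Qed.

Lemma supp_sub (rs : seq (seq nat * seq nat * nat)) (c : seq nat * seq nat * nat -> R) :
  {subset msupp (\sum_(rr <- rs) c rr *: cmonom R [seq (inord i : 'I_21) | i <- rr.1.1])
     <= [seq mm rr.1.1 | rr <- rs & c rr != 0]}.
Proof.
elim: rs => [|rr rs IH] m.
  by rewrite big_nil => /msupp_zero.
rewrite big_cons => /msuppD_le; rewrite mem_cat /= => /orP [H|H].
  case: eqP H => [->|_] H.
    by move: H; rewrite scale0r => /msupp_zero.
  move/msuppZ_le: H; rewrite cmonomE msuppX inE => /eqP ->.
  by rewrite inE eqxx.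
by case: (c rr != 0); rewrite ?inE IH ?orbT.
Qed.

Lemma binom_comb W : W \in Gs -> is_binomial (comb W).
Proof.
move=> HW; rewrite /is_binomial comb_key; last exact: (allP gs_bound).
set S := undup [seq rr.1.1 | rr <- erk_raw & swn W rr != 0].
have HS : (size S <= 2)%N by exact: (allP binom_check).
apply: leq_trans HS; rewrite -(size_map mm).
apply: uniq_leq_size; first exact: msupp_uniq.
move=> m /supp_sub /mapP [rr]; rewrite mem_filter => /andP [Hc Hrr] ->.
apply: map_f; rewrite mem_undup; apply: map_f; rewrite mem_filter Hrr andbT.
apply: contraNneq Hc => ->; by rewrite mulr0.
Qed.

Lemma ssE (s : 'I_21) : (ss_gens erk_network k)`_s = F s.
Proof. by rewrite /ss_gens (nth_map ord0) ?size_enum_ord ?ltn_ord // nth_ord_enum. Qed.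

Lemma F_zero (s : 'I_21) : (F s).@[fun _ => 0] = 0.
Proof.
rewrite /massaction /erk_network big_map.
rewrite (big_morph (meval (fun _ : 'I_21 => (0:R))) (@mevalD _ _ _) (meval0 _)).
apply: big1_seq => rr /andP [_ Hrr] /=.
have /andP [_ Hne] := allP bound_check rr Hrr.
rewrite mevalZ; case: rr.1.1 Hne => [|a y] //= _.
by rewrite /cmonom big_cons mevalM mevalXU mul0r mulr0.
Qed.

Lemma comb_cat A B : comb (A ++ B) = comb A + comb B.
Proof. by rewrite /comb big_cat. Qed.

Lemma comb_scale z L : comb [seq (q.1, z * q.2) | q <- L] = z%:~R * comb L.
Proof.
rewrite /comb big_map mulr_sumr; apply: eq_bigr => q _ /=.
by rewrite intrM mulrA.
Qed.

Lemma comb_expand Ws : comb (expand Ws) = \sum_(p <- Ws) p.2%:~R * comb (nth [::] Gs p.1).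
Proof.
elim: Ws => [|p Ws IH]; first by rewrite /comb !big_nil.
by rewrite /expand /= comb_cat comb_scale -/(expand Ws) IH big_cons.
Qed.

Lemma nth_gs i : [seq comb W | W <- Gs]`_i = comb (nth [::] Gs i).
Proof.
case: (ltnP i (size Gs)) => Hi; first by rewrite (nth_map [::]).
by rewrite !nth_default ?size_map // /comb big_nil.
Qed.

End Main.

Theorem mainTheorem3 (R : realFieldType) (k : 'I_30 -> R) (hk : forall j, 0 < k j) :
  has_toric_steady_states erk_network k.
Proof.
split; last first.
  by exists (fun _ => 0); split => // s; exact: F_zero.
exists [seq comb R k W | W <- Gs]; split.
  by rewrite all_map; apply/allP => W HW /=; exact: binom_comb.
move=> p; split; apply: Isub => i.
  rewrite nth_gs /comb; apply: Isum => q; apply: IM.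
  rewrite -ssE; exact: IG.
case: (ltnP i 21) => Hi; last first.
  by rewrite nth_default ?size_map -?enumT ?size_enum_ord //; exact: I0.
have := ssE R k (inord i); rewrite inordK // => ->.
have -> : massaction erk_network k (inord i) = comb R k [:: (i, 1%:Z)].
  by rewrite /comb big_cons big_nil mul1r addr0.
have -> : comb R k [:: (i, 1%:Z)] = comb R k (expand (nth [::] Wtab i)).
  rewrite !comb_key //=; last by rewrite Hi.
    apply: eq_big_seq => rr Hrr; congr (_ *: _); congr (_ * _%:~R); apply/eqP.
    by have := allP expr_check i; rewrite mem_iota add0n => /(_ Hi) /allP /(_ rr Hrr).
  by have := allP expand_bound i; rewrite mem_iota add0n => /(_ Hi).
rewrite comb_expand; apply: Isum => q; apply: IM; rewrite -nth_gs; exact: IG.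
Qed.
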